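(* Suppose $\vec \theta \in \mathbb R^d$ and $\epsilon > 0$ have the property that for any pair of vectors $\vec x, \vec y \in (\mathbb Z_g)^k$, there are $z \in \mathbb Z$ and $\epsilon_1$ with $|\epsilon_1| < \epsilon$ such that $\vec \theta \cdot Z(\vec x) - \vec \theta \cdot Z(\vec y) = 2 \pi z + \epsilon_1$. Then for any index $(\{i,j\},a)$, there are $z \in \mathbb Z$ and $\epsilon_3$ with $|\epsilon_3| < 2 \epsilon$ such that $\theta_{\{i,j\},a} - \epsilon_3 = \frac{2 \pi}{g} z$.
   Context: Let $g\ge 2$, $k\ge 2$ be integers, $\mathbb Z_g$ the integers mod $g$, and $d=\binom{k}{2}(g-1)$. Index the coordinates of $\mathbb R^d$ by pairs $(\{i,j\},a)$ with $1\le i<j\le k$ and $a\in\mathbb Z_g\setminus\{0\}$. Define $Z:(\mathbb Z_g)^k\to\mathbb R^d$ by $[Z(\vec x)]_{\{i,j\},a}=1-1/g$ if $x_i-x_j=a$ and $-1/g$ otherwise. *)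

(* Defs.v *)
From Stdlib Require Import Reals.
From mathcomp Require Import all_boot all_order all_algebra.
From mathcomp Require Import Rstruct.
Set Implicit Arguments. Unset Strict Implicit. Unset Printing Implicit Defensive.
Import Order.TTheory GRing.Theory Num.Theory.
Local Open Scope ring_scope.

(* Z_g is modelled by 'I_g (residues 0..g-1); (Z_g)^k by functions 'I_k -> 'I_g.
   Coordinates ({i,j},a) with i<j, a <> 0 are modelled by triples (i,j,a)
   with i < j and a != 0; a vector theta in R^d is a function on such triples
   (values on other triples are irrelevant and never used). *)

Definition zdiff (g k : nat) (x : 'I_k -> 'I_g) (i j : 'I_k) : nat :=
  (((x i : nat) + g - (x j : nat)) %% g)%N.

Definition Zcoord (g k : nat) (x : 'I_k -> 'I_g) (i j : 'I_k) (a : 'I_g) : R :=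
  (if zdiff x i j == nat_of_ord a then 1 else 0) - (g%:R)^-1.

Definition dotZ (g k : nat) (theta : 'I_k -> 'I_k -> 'I_g -> R)
  (x : 'I_k -> 'I_g) : R :=
  \sum_(i : 'I_k) \sum_(j : 'I_k | (i < j)%N) \sum_(a : 'I_g | a != 0%N :> nat)
    theta i j a * Zcoord x i j a.

(* Main.v *)
Require Import Defs.
From Stdlib Require Import Reals.
From mathcomp Require Import all_boot all_order all_algebra.
From mathcomp Require Import Rstruct.
From mathcomp Require Import zify ring lra.
Import Order.TTheory GRing.Theory Num.Theory.
Local Open Scope ring_scope.

Lemma Zcoord_loc (g k : nat) (x y : 'I_k -> 'I_g) p q b :
  x p = y p -> x q = y q -> Zcoord x p q b = Zcoord y p q b.
Proof. by move=> hp hq; rewrite /Zcoord /zdiff hp hq. Qed.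

Lemma mod2 (g m : nat) : (m < g + g)%N -> (m %% g = if (m < g)%N then m else m - g)%N.
Proof.
move=> h; case: ifP => hm; first by rewrite modn_small.
have -> : m = (m - g + g)%N by rewrite subnK // leqNgt hm.
by rewrite modnDr modn_small ?addnK //; lia.
Qed.

Definition Vv {g k : nat} (i j : 'I_k) (z0 u v : 'I_g) : 'I_k -> 'I_g :=
  fun m => if m == i then u else if m == j then v else z0.

Definition shf {g : nat} (hg : (0 < g)%N) (a c : 'I_g) : 'I_g :=
  Ordinal (ltn_pmod (c + a) hg).

Lemma shf_inj g (hg : (0 < g)%N) a : injective (@shf g hg a).
Proof.
move=> c c' /(congr1 val) /= h; apply/val_inj => /=.
move: h (ltn_ord c) (ltn_ord c') (ltn_ord a); set x := nat_of_ord c; set y := nat_of_ord c'; set z := nat_of_ord a; move=> h *.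
move: h; rewrite !mod2; try lia. case: ifP; case: ifP; lia.
Qed.

Lemma key (g k : nat) (hg : (0 < g)%N) (i j : 'I_k) (z0 a : 'I_g)
  (hij : (i < j)%N) (ha : a != 0%N :> nat) (p q : 'I_k) (b : 'I_g)
  (hpq : (p < q)%N) (hb : b != 0%N :> nat) :
  \sum_(c : 'I_g) Zcoord (Vv i j z0 (shf hg a c) c) p q b
  - \sum_(c : 'I_g) Zcoord (Vv i j z0 c c) p q b
  = if (p == i) && (q == j) && (b == a) then g%:R else 0.
Proof.
have ne_ij : (i == j) = false by apply/negbTE; rewrite neq_ltn hij.
have ne_pq : (p == q) = false by apply/negbTE; rewrite neq_ltn hpq.
case: (eqVneq q j) => [->|hqj].
  case: (eqVneq p i) => [->|hpi].
    rewrite /= -sumrB.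
    under eq_bigr => c _.
      rewrite /Zcoord /zdiff /Vv eqxx (eq_sym j i) ne_ij eqxx /=.
      have -> : ((((c + a) %% g)%N + g - c) %% g)%N = a.
        have := ltn_ord c; have := ltn_ord a => ha' hc'.
        rewrite (@mod2 g (c + a)); last lia.
        rewrite mod2; last (case: ifP; lia).
        case: ifP; case: ifP; lia.
      have -> : ((c + g - c) %% g)%N == b = false.
        by rewrite addKn modnn eq_sym (negbTE hb).
      rewrite (_ : forall u w : R, (u - w) - (0 - w) = u); last by move=> u w; rewrite sub0r opprK subrK.
    over.
    rewrite sumr_const card_ord.
    case: (eqVneq b a) => [->|hba]; first by rewrite eqxx.
    have -> : (nat_of_ord a == nat_of_ord b) = false by apply/eqP => /val_inj h; rewrite h eqxx in hba.
    by rewrite mul0rn.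
  rewrite /= -sumrB big1 // => c _.
  rewrite (@Zcoord_loc _ _ _ (Vv i j z0 c c)) ?subrr // /Vv ?(negbTE hpi) ?ne_ij //.
  by rewrite (eq_sym j i) ne_ij.
rewrite /= andbF.
case: (eqVneq p j) => [hpj|hpj].
  rewrite -sumrB big1 // => c _.
  rewrite (@Zcoord_loc _ _ _ (Vv i j z0 c c)) ?subrr // /Vv.
    by rewrite hpj (eq_sym j i) ne_ij eqxx.
  have -> : (q == i) = false.
    apply/negbTE; rewrite neq_ltn; apply/orP; right.
    by apply: ltn_trans hij _; rewrite -hpj.
  by rewrite (negbTE hqj).
rewrite (eq_bigr (fun c => Zcoord (Vv i j z0 (shf hg a c) (shf hg a c)) p q b)).
  by rewrite [X in _ - X](reindex_inj (@shf_inj _ hg a)) /= subrr.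
move=> c _; apply: Zcoord_loc; rewrite /Vv ?(negbTE hpj) ?(negbTE hqj) //.
Qed.

Lemma sum_err (T : Type) (s : seq T) (f : T -> R) (eps : R) :
  (forall c, exists (z : int) (e : R), `|e| < eps /\ f c = 2 * PI * z%:~R + e) ->
  exists (z : int) (e : R), `|e| <= (size s)%:R * eps /\
    \sum_(c <- s) f c = 2 * PI * z%:~R + e.
Proof.
move=> H; elim: s => [|c s [z [e [he hs]]]].
  by exists 0, 0; rewrite big_nil normr0 mul0r mulr0 addr0.
have [z1 [e1 [he1 hc]]] := H c.
exists (z1 + z)%R, (e1 + e); split.
  rewrite /= -addn1 natrD mulrDl mul1r addrC.
  apply: (le_trans (ler_normD _ _)); apply: lerD => //; exact: ltW.
rewrite big_cons hc hs intrD mulrDr; ring.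
Qed.

Theorem corollary2p2 (g k : nat) (hg : (2 <= g)%N) (hk : (2 <= k)%N)
  (theta : 'I_k -> 'I_k -> 'I_g -> R) (eps : R) (heps : 0 < eps) :
  (forall x y : 'I_k -> 'I_g, exists (z : int) (eps1 : R),
      `|eps1| < eps /\
      dotZ theta x - dotZ theta y = 2 * PI * z%:~R + eps1) ->
  forall (i j : 'I_k) (a : 'I_g), (i < j)%N -> a != 0%N :> nat ->
    exists (z : int) (eps3 : R),
      `|eps3| < 2 * eps /\
      theta i j a - eps3 = 2 * PI / g%:R * z%:~R.
Proof.
move=> H i j a hij ha.
have g0 : (0 < g)%N by apply: leq_trans hg.
pose z0 : 'I_g := Ordinal g0.
pose X c := Vv i j z0 (shf g0 a c) c.
pose Y c := Vv i j z0 c c.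
have E c : dotZ theta (X c) - dotZ theta (Y c) =
  \sum_(p : 'I_k) \sum_(q : 'I_k | (p < q)%N) \sum_(b : 'I_g | b != 0%N :> nat)
     theta p q b * (Zcoord (X c) p q b - Zcoord (Y c) p q b).
  rewrite /dotZ -sumrB; apply: eq_bigr => p _; rewrite -sumrB.
  apply: eq_bigr => q _; rewrite -sumrB; apply: eq_bigr => b _.
  by rewrite -mulrBr.
have S : \sum_(c : 'I_g) (dotZ theta (X c) - dotZ theta (Y c)) = theta i j a * g%:R.
  rewrite (eq_bigr _ (fun c _ => E c)) exchange_big /=.
  rewrite (bigD1 i) //= [X in _ + X]big1 ?addr0; last first.
    move=> p hp; rewrite exchange_big /=; apply: big1 => q hq.
    rewrite exchange_big /=; apply: big1 => b hb.
    by rewrite -mulr_sumr sumrB key // (negbTE hp) mulr0.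
  rewrite exchange_big /= (bigD1 j) //= [X in _ + X]big1 ?addr0; last first.
    move=> q /andP [hq hqj]; rewrite exchange_big /=; apply: big1 => b hb.
    by rewrite -mulr_sumr sumrB key // eqxx (negbTE hqj) mulr0.
  rewrite exchange_big /= (bigD1 a) //= [X in _ + X]big1 ?addr0; last first.
    move=> b /andP [hb hba].
    by rewrite -mulr_sumr sumrB key // !eqxx (negbTE hba) mulr0.
  by rewrite -mulr_sumr sumrB key // !eqxx.
have [z [e [he hs]]] := @sum_err _ (enum 'I_g)
  (fun c => dotZ theta (X c) - dotZ theta (Y c)) eps (fun c => H (X c) (Y c)).
rewrite size_enum_ord big_enum /= in he hs.
have hs' : theta i j a * g%:R = 2 * PI * z%:~R + e.
  by rewrite -S -hs; apply: eq_bigl => c.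
have gpos : (0 : R) < g%:R by rewrite ltr0n.
exists z, (e / g%:R); split.
  rewrite normrM normfV (gtr0_norm gpos) in he *.
  apply: (le_lt_trans (y := eps)).
    by rewrite ler_pdivrMr // mulrC.
  lra.
apply: (mulIf (lt0r_neq0 gpos)).
rewrite mulrBl hs'.
field; exact: lt0r_neq0 gpos.
Qed.
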